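(* Let $P=\bigcap_{j=1}^m\{\mathbf{u}\in\mathbb{R}^n:\langle\mathbf{u},\mathbf{v}_j\rangle-\lambda_j\ge0\}$ be an $n$-dimensional polytope in $\mathbb{R}^n$. If $\mathbf{u}\notin\mathrm{Trop}(P,\mathbf{m})$ for some lattice point $\mathbf{m}\in\mathbb{Z}^n$, then there exists a primitive lattice point $\widetilde{\mathbf{m}}\in\mathbb{Z}^n$ orthogonal to an $(n-1)$-dimensional subspace of $\mathbb{R}^n$ spanned by facet normal vectors $\mathbf{v}_j$ such that $\mathbf{u}\notin\mathrm{Trop}(P,\widetilde{\mathbf{m}})$.
   Context: The description of $P$ is non-redundant (each half-space bounds a distinct facet) and the inward normals $\mathbf{v}_j\in\mathbb{Z}^n$ are primitive; $\ell_j(\mathbf{u})=\langle\mathbf{u},\mathbf{v}_j\rangle-\lambda_j$. For $\mathbf{m}\in\mathbb{Z}^n$, $\mathrm{Trop}(P,\mathbf{m})$ is the non-differentiable locus of $\mathbf{u}\mapsto\min\{\ell_j(\mathbf{u}):\langle\mathbf{m},\mathbf{v}_j\rangle\neq0\}$, equivalently the set of $\mathbf{u}$ at which this minimum is attained by at least two distinct indices $j$ with $\langle\mathbf{m},\mathbf{v}_j\rangle\ne0$; $\mathrm{Trop}(P,\mathbf{0})=\mathbb{R}^n$. *)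

(* Defs.v *)
From HB Require Import structures.
From mathcomp Require Import all_boot all_order all_algebra.
From mathcomp Require Import reals.
Set Implicit Arguments. Unset Strict Implicit. Unset Printing Implicit Defensive.
Import Order.TTheory GRing.Theory Num.Theory.
Local Open Scope ring_scope.

Section Defs.
Variables (R : realType) (n m : nat).
Variables (v : 'I_m -> 'rV[int]_n) (lam : 'I_m -> R).

Definition dotR (u : 'rV[R]_n) (w : 'rV[int]_n) : R :=
  \sum_(i < n) u 0 i * (w 0 i)%:~R.

Definition dotZ (a b : 'rV[int]_n) : int := \sum_(i < n) a 0 i * b 0 i.

Definition ell (j : 'I_m) (u : 'rV[R]_n) : R := dotR u (v j) - lam j.

Definition inP (u : 'rV[R]_n) : Prop := forall j, 0 <= ell j u.

Definition inTrop (mm : 'rV[int]_n) (u : 'rV[R]_n) : Prop :=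
  if mm == 0 then True else
  exists j k : 'I_m, [/\ j != k, dotZ mm (v j) != 0, dotZ mm (v k) != 0,
     ell j u = ell k u &
     forall i, dotZ mm (v i) != 0 -> ell j u <= ell i u].

Definition normal_mx : 'M[R]_(m, n) := \matrix_(j, i) ((v j) 0 i)%:~R.

Definition normal_span (J : {set 'I_m}) : 'M[R]_n :=
  (\sum_(j in J) <<row j normal_mx>>)%MS.
End Defs.

Definition primitive (n : nat) (w : 'rV[int]_n) : Prop :=
  w != 0 /\ forall d : int, (forall i : 'I_n, (d %| w ord0 i)%Z) -> `|d| = 1.

(* Main.v *)
Require Import Defs.
From HB Require Import structures.
From mathcomp Require Import all_boot all_order all_algebra.
From mathcomp Require Import reals.
From mathcomp Require Import lra zify.
Set Implicit Arguments. Unset Strict Implicit. Unset Printing Implicit Defensive.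
Import Order.TTheory GRing.Theory Num.Theory.
Local Open Scope ring_scope.

Lemma dotR_add (R : realType) n (a b : 'rV[R]_n) w :
  dotR (a + b) w = dotR a w + dotR b w.
Proof. by rewrite /dotR -big_split; apply: eq_bigr => i _; rewrite mxE mulrDl. Qed.

Lemma dotR_scale (R : realType) n (t : R) (a : 'rV[R]_n) w :
  dotR (t *: a) w = t * dotR a w.
Proof. by rewrite /dotR mulr_sumr; apply: eq_bigr => i _; rewrite mxE mulrA. Qed.

Lemma rank_normal_R (R : realType) (n m : nat)
  (v : 'I_m -> 'rV[int]_n) (lam : 'I_m -> R)
  (Hbounded : exists M : R, forall u, inP v lam u -> forall i, `|u 0 i| <= M)
  (Hfull : exists u0, forall j, 0 < ell v lam j u0) :
  \rank (normal_mx R v) = n.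
Proof.
apply/eqP; rewrite eqn_leq rank_leq_col /=; rewrite leqNgt; apply/negP => hlt.
have hk : kermx (normal_mx R v)^T != 0.
  by rewrite -mxrank_eq0 mxrank_ker mxrank_tr subn_eq0 -ltnNge.
set d := nz_row (kermx (normal_mx R v)^T).
have dnz : d != 0 by rewrite nz_row_eq0.
have dker : d *m (normal_mx R v)^T = 0 by apply/sub_kermxP; apply: nz_row_sub.
have dorth : forall j, dotR d (v j) = 0.
  move=> j; have := congr1 (fun A : 'M_(1,m) => A 0 j) dker; rewrite !mxE => <-.
  by apply: eq_bigr => i _; rewrite !mxE.
have [i di] : exists i, d 0 i != 0.
  apply/existsP; apply: contraR dnz; rewrite negb_exists => /forallP H.
  by apply/eqP/rowP => k; rewrite mxE; apply/eqP; rewrite -(negbK (_ == _)) H.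
case: Hbounded => M HM; case: Hfull => u0 Hu0.
have u0P : inP v lam u0 by move=> j; apply/ltW.
set t := (M + `|u0 0 i| + 1) / d 0 i.
have uP : inP v lam (u0 + t *: d).
  move=> j; rewrite /ell dotR_add dotR_scale dorth mulr0 addr0; exact: (ltW (Hu0 j)).
have := HM _ uP i; rewrite !mxE /t divfK //.
have := HM _ u0P i; have := ler_norm (- u0 0 i); rewrite normrN => h1.
move=> h2.


have h3 := normr_ge0 (u0 0 i); rewrite (@ger0_norm _ (u0 0 i + _)); first lra.
lra. Qed.
Section Gen.
Variable F : fieldType.

Definition SJ n m (N : 'M[F]_(m, n)) (J : {set 'I_m}) : 'M[F]_(m, n) :=
  \matrix_(j, i) (if j \in J then N j i else 0).

Lemma row_SJ n m (N : 'M[F]_(m, n)) (J : {set 'I_m}) j :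
  row j (SJ N J) = if j \in J then row j N else 0.
Proof. by apply/rowP => i; rewrite !mxE; case: (j \in J); rewrite ?mxE. Qed.

Lemma row_le_SJ n m (N : 'M[F]_(m, n)) (J : {set 'I_m}) j : j \in J -> (row j N <= SJ N J)%MS.
Proof. by move=> hj; rewrite -[row j N](_ : row j (SJ N J) = _) ?row_sub // row_SJ hj. Qed.

Lemma SJ_U1 n m (N : 'M[F]_(m, n)) (J : {set 'I_m}) k : (SJ N (k |: J) :=: SJ N J + row k N)%MS.
Proof.
apply/eqmxP; rewrite /eqmx; apply/andP; split.
  apply/row_subP => i; rewrite row_SJ in_setU1.
  case: eqP => [->|_] /=; first exact: addsmxSr.
  case hi: (i \in J); last exact: sub0mx.
  exact: submx_trans (row_le_SJ N hi) (addsmxSl _ _).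
rewrite addsmx_sub; apply/andP; split; last by apply: row_le_SJ; rewrite setU11.
apply/row_subP => i; rewrite row_SJ; case hi: (i \in J); last exact: sub0mx.
by apply: row_le_SJ; rewrite in_setU1 hi orbT.
Qed.

Lemma exchange k n (B : 'M[F]_(k, n)) (a c : 'rV[F]_n) :
  ~~ (a <= B)%MS -> (a <= B + c)%MS -> (c <= B + a)%MS.
Proof.
move=> naB aBc.
have s1 : (B + a <= B + c)%MS by rewrite addsmx_sub addsmxSl aBc.
have r1 : (\rank (B + c) <= \rank B + 1)%N.
  apply: leq_trans (mxrank_adds_leqif B c) _; by rewrite leq_add2l rank_leq_row.
have r2 : (\rank B < \rank (B + a))%N.
  have : (B < B + a)%MS.
    rewrite ltmxE addsmxSl /=; apply: contra naB => h.
    exact: submx_trans (addsmxSr _ _) h.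
  by rewrite ltmxErank => /andP[].
have e : (\rank (B + a) == \rank (B + c)).
  by rewrite eqn_leq mxrankS //=; apply: leq_trans r1 _; rewrite addn1.
have [_ hiff] := mxrank_leqif_sup s1; rewrite hiff in e.
exact: submx_trans (addsmxSr _ _) e.
Qed.

Lemma kill n k1 k2 (A : 'M[F]_(k1, n)) (B : 'M[F]_(k2, n)) (w : 'rV[F]_n) :
  (A <= B)%MS -> w *m B^T = 0 -> w *m A^T = 0.
Proof. by case/submxP => X -> h; rewrite trmx_mul mulmxA h mul0mx. Qed.

Lemma exists_J n m (N : 'M[F]_(m, n)) (rankN : \rank N = n)
  (T : {set 'I_m}) (j0 : 'I_m) (hj0T : j0 \notin T)
  (hnot : ~~ (row j0 N <= SJ N T)%MS) :
  exists J : {set 'I_m}, [/\ T \subset J, j0 \notin J, \rank (SJ N J) = n.-1 &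
     forall w : 'rV_n, w *m (SJ N J)^T = 0 -> w *m (row j0 N)^T = 0 -> w = 0].
Proof.
pose good (J : {set 'I_m}) := [&& T \subset J, j0 \notin J & ~~ (row j0 N <= SJ N J)%MS].
have gT : good T by rewrite /good subxx hj0T hnot.
case: (@arg_maxnP _ T good (fun J => #|J|) gT) => J /and3P[TJ j0J nJ] Jmax.
have allrows : (N <= SJ N J + row j0 N)%MS.
  apply/row_subP => k; apply/negPn/negP => nk.
  have kJ : k \notin J.
    by apply: contra nk => kJ; apply: submx_trans (row_le_SJ N kJ) (addsmxSl _ _).
  have kj0 : k != j0 by apply: contra nk => /eqP ->; apply: addsmxSr.
  have gk : good (k |: J).
    rewrite /good (subset_trans TJ (subsetUr _ _)) in_setU1 eq_sym (negbTE kj0) j0J /=.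
    rewrite SJ_U1; apply: contra nk; exact: exchange.
  by have := Jmax _ gk; rewrite cardsU1 kJ add1n /= ltnn.
have rJn : (\rank (SJ N J) < n)%N.
  rewrite ltn_neqAle rank_leq_col andbT; apply: contra nJ => h.
  exact: submx_full.
have rJ : \rank (SJ N J) = n.-1.
  have h := mxrankS allrows; rewrite rankN in h.
  have h2 := leq_trans h (mxrank_adds_leqif (SJ N J) (row j0 N)).
  have h3 := rank_leq_row (row j0 N).
  lia.
exists J; split => // w h1 h2.
have hw : w *m N^T = 0.
  have allc : (N <= col_mx (SJ N J) (row j0 N))%MS by rewrite -addsmxE.
  by apply: (kill allc); rewrite tr_col_mx mul_mx_row h1 h2 row_mx0.
have : (w <= kermx N^T)%MS by apply/sub_kermxP.
move/mxrankS; rewrite mxrank_ker mxrank_tr rankN subnn leqn0 mxrank_eq0.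
by move/eqP.
Qed.
Lemma span_SJ n m (N : 'M[F]_(m, n)) (J : {set 'I_m}) :
  (\sum_(j in J) <<row j N>> :=: SJ N J)%MS.
Proof.
apply/eqmxP; apply/andP; split.
  by apply/sumsmx_subP => j hj; rewrite genmxE; apply: row_le_SJ.
apply/row_subP => i; rewrite row_SJ; case hi: (i \in J); last exact: sub0mx.
by apply: (sumsmx_sup i) => //; rewrite genmxE.
Qed.
End Gen.
Lemma int_prim n (w : 'rV[rat]_n) : w != 0 ->
  exists (mt : 'rV[int]_n) (c : rat),
    [/\ primitive mt, c != 0 & forall i, (mt 0 i)%:~R = c * w 0 i].
Proof.
move=> wnz.
have [i0 wi0] : exists i, w 0 i != 0.
  apply/existsP; apply: contraR wnz; rewrite negb_exists => /forallP H.
  by apply/eqP/rowP => k; rewrite mxE; apply/eqP; rewrite -(negbK (_ == _)) H.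
pose D : int := \prod_i denq (w 0 i).
have Dnz : D != 0 by rewrite prodf_seq_neq0; apply/allP => i _; apply: denq_neq0.
pose z i : int := numq (w 0 i) * \prod_(k | k != i) denq (w 0 k).
have zE : forall i, (z i)%:~R = w 0 i * D%:~R :> rat.
  move=> i; rewrite /z /D [X in _ = _ * X%:~R](bigD1 i) //= !intrM numqE -mulrA.
  by [].

have znz : z i0 != 0.
  by rewrite -(intr_eq0 rat) zE mulf_neq0 // intr_eq0.
pose g := (\big[gcdn/0%N]_i `|z i|%N)%N.
have gdvd : forall i, (g %| `|z i|)%N by move=> i; apply: (biggcdn_inf i).
have gpos : (0 < g)%N.
  rewrite lt0n; apply/negP => /eqP g0; have := gdvd i0; rewrite g0 dvd0n.
  by rewrite absz_eq0 (negbTE znz).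
pose mt := \row_i ((z i) %/ g%:Z)%Z.
have mtE : forall i, mt 0 i * g%:Z = z i.
  by move=> i; rewrite mxE divzK // dvdzE; apply: gdvd.
exists mt, (D%:~R / g%:R); split.
- split.
    apply/eqP => /rowP /(_ i0); rewrite !mxE => h.
    by move: (mtE i0); rewrite mxE h mul0r => /esym/eqP; rewrite (negbTE znz).
  move=> d hd.
  have h1 : (`|d|%N * g %| g)%N.
    apply/dvdn_biggcdP => i _; rewrite -(mtE i) abszM /=.
    rewrite dvdn_pmul2r //.
    by have := hd i.
  have : (`|d|%N %| 1)%N by rewrite -(dvdn_pmul2r gpos) mul1n.
  by rewrite dvdn1 => /eqP h; rewrite -abszE h.
- by rewrite mulf_neq0 // ?intr_eq0 // invr_eq0 pnatr_eq0 -lt0n.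
move=> i; have := congr1 (fun x : int => x%:~R : rat) (mtE i).
rewrite /= intrM zE => h.
apply: (mulIf (x := g%:R)); first by rewrite pnatr_eq0 -lt0n.
rewrite !pmulrn h mulrAC divfK; first by rewrite mulrC.
by rewrite intr_eq0 -lt0n.
Qed.

Unset Implicit Arguments.
Set Strict Implicit.

Theorem lemma6p4 (R : realType) (n m : nat)
  (v : 'I_m -> 'rV[int]_n) (lam : 'I_m -> R)
  (Hprim : forall j, primitive (v j))
  (Hbounded : exists M : R, forall u, inP v lam u -> forall i, `|u 0 i| <= M)
  (Hfull : exists u0, forall j, 0 < ell v lam j u0)
  (Hnonred : forall j, exists w, [/\ inP v lam w, ell v lam j w = 0 &
                                   forall k, k != j -> 0 < ell v lam k w])
  (u : 'rV[R]_n) (mm : 'rV[int]_n) (Hu : ~ inTrop v lam mm u) :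
  exists mt : 'rV[int]_n,
    [/\ primitive mt,
        exists J : {set 'I_m},
          \rank (normal_span R v J) = n.-1 /\
          (forall j, j \in J -> dotZ mt (v j) = 0)
      & ~ inTrop v lam mt u].
Proof.
have mmnz : mm != 0.
  by apply/negP => /eqP h; apply: Hu; rewrite /inTrop h eqxx.
have npos : (0 < n)%N.
  case: n mm mmnz {v Hprim Hbounded Hfull Hnonred Hu u} => // mm.
  by rewrite thinmx0 eqxx.
pose NQ : 'M[rat]_(m, n) := \matrix_(j, i) ((v j 0 i)%:~R).
have NQmap : normal_mx R v = map_mx ratr NQ.
  by apply/matrixP => j i; rewrite !mxE ratr_int.
have rankQ : \rank NQ = n.
  by have := @mxrank_map rat R ratr _ _ NQ; rewrite -NQmap => <-; apply: rank_normal_R Hbounded Hfull.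
pose mmQ : 'rV[rat]_n := map_mx intr mm.
have dotQ : forall (a : 'rV[rat]_n) j,
    (a *m (row j NQ)^T) 0 0 = \sum_i a 0 i * ((v j 0 i)%:~R).
  by move=> a j; rewrite !mxE; apply: eq_bigr => i _; rewrite !mxE.
have dotmm : forall j, (mmQ *m (row j NQ)^T) 0 0 = (dotZ mm (v j))%:~R.
  move=> j; rewrite dotQ /dotZ rmorph_sum; apply: eq_bigr => i _.
  by rewrite !mxE rmorphM.
pose S := [set j | dotZ mm (v j) != 0].
have [js jsS] : exists j, j \in S.
  apply/existsP; apply: contraR mmnz; rewrite negb_exists => /forallP H.
  have h0 : mmQ *m NQ^T = 0.
    apply/rowP => j; have := dotmm j; 
    have := H j; rewrite inE negbK => /eqP -> e.
    transitivity ((mmQ *m (row j NQ)^T) 0 0); last by rewrite e !mxE mulr0z.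
    by rewrite !mxE; apply: eq_bigr => i _; rewrite !mxE.
  have : (mmQ <= kermx NQ^T)%MS by apply/sub_kermxP.
  move/mxrankS; rewrite mxrank_ker mxrank_tr rankQ subnn leqn0 mxrank_eq0.
  move=> /eqP h; apply/eqP/rowP => i; have := congr1 (fun A : 'rV_n => A 0 i) h.
  by rewrite !mxE => /eqP; rewrite intr_eq0 => /eqP.
case: (arg_minP (fun j => ell v lam j u) jsS) => j0 j0S j0min.
have j0strict : forall i, i \in S -> i != j0 -> ell v lam j0 u < ell v lam i u.
  move=> i iS ij0; rewrite lt_neqAle j0min // andbT; apply/negP => /eqP e.
  apply: Hu; rewrite /inTrop (negbTE mmnz); exists j0, i; split => //.
  - by rewrite eq_sym.
  - by have j0S' : j0 \in S := j0S; rewrite inE in j0S'.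
  - by rewrite inE in iS.
  - move=> k kS; have kS' : k \in S by rewrite inE.
    exact: (j0min k kS').
pose T := [set j | (ell v lam j u <= ell v lam j0 u) && (j != j0)].
have j0T : j0 \notin T by rewrite inE eqxx andbF.
have TS : forall t, t \in T -> dotZ mm (v t) = 0.
  move=> t; rewrite inE => /andP[le ne]; apply/eqP; apply/negPn/negP => hS.
  have := j0strict t; rewrite inE hS => /(_ isT ne); rewrite ltNge le.
  done.
have hnot : ~~ (row j0 NQ <= SJ NQ T)%MS.
  apply/negP => hle.
  have h0 : mmQ *m (SJ NQ T)^T = 0.
    apply/rowP => j; rewrite [RHS]mxE.
    case hj: (j \in T).
      transitivity ((mmQ *m (row j NQ)^T) 0 0); last by rewrite dotmm TS // mulr0z.
      by rewrite !mxE; apply: eq_bigr => i _; rewrite !mxE hj.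
    by rewrite mxE big1 // => i _; rewrite !mxE hj mulr0.
  have := kill hle h0; move/(congr1 (fun A : 'M_1 => A 0 0)).
  rewrite dotmm mxE => /eqP; rewrite intr_eq0 => /eqP; apply/eqP.
  by have j0S' : j0 \in S := j0S; rewrite inE in j0S'.
case: (exists_J rankQ j0T hnot) => J [TJ j0J rJ Jker].
pose K := kermx (SJ NQ J)^T.
have Knz : K != 0.
  rewrite -mxrank_eq0 mxrank_ker mxrank_tr rJ.
  by case: n npos {v Hprim Hbounded Hfull Hnonred Hu u mm mmnz NQ NQmap rankQ mmQ dotQ dotmm S js jsS j0S j0min j0strict T j0T TS hnot J TJ j0J rJ Jker K} => // n' _; rewrite /= subSnn.
pose w := nz_row K.
have wnz : w != 0 by rewrite nz_row_eq0.
have wK : w *m (SJ NQ J)^T = 0 by apply/sub_kermxP; apply: nz_row_sub.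
have wj0 : (w *m (row j0 NQ)^T) 0 0 != 0.
  apply: contra wnz => /eqP h; apply/eqP; apply: Jker wK _.
  by apply/rowP => i; rewrite (ord1 i) h mxE.
have wJ : forall j, j \in J -> (w *m (row j NQ)^T) 0 0 = 0.
  move=> j hj; transitivity ((w *m (SJ NQ J)^T) 0 j); last by rewrite wK mxE.
  by rewrite !mxE; apply: eq_bigr => i _; rewrite !mxE hj.
case: (int_prim wnz) => mt [c [mtP cnz mtE]].
have dotmt : forall j, (dotZ mt (v j))%:~R = c * (w *m (row j NQ)^T) 0 0.
  move=> j; rewrite dotQ /dotZ rmorph_sum mulr_sumr; apply: eq_bigr => i _.
  by rewrite rmorphM /= mtE mulrA.
have mtJ : forall j, j \in J -> dotZ mt (v j) = 0.
  by move=> j hj; apply/eqP; rewrite -(intr_eq0 rat) dotmt wJ // mulr0.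
have mtj0 : dotZ mt (v j0) != 0.
  by rewrite -(intr_eq0 rat) dotmt mulf_neq0.
exists mt; split => //.
  exists J; split => //.
  rewrite /normal_span (span_SJ (normal_mx R v) J).
  have -> : SJ (normal_mx R v) J = map_mx ratr (SJ NQ J).
    apply/matrixP => j i; rewrite !mxE; case: (j \in J); rewrite ?mxE ?rmorph0 ?ratr_int //.
  by rewrite mxrank_map.
have mtnz : mt != 0 by case: mtP.
rewrite /inTrop (negbTE mtnz) => -[j [k [jk hj hk ejk hmin]]].
have big : forall i, dotZ mt (v i) != 0 -> i != j0 -> ell v lam j0 u < ell v lam i u.
  move=> i hi ij0; rewrite ltNge; apply/negP => le.
  have iT : i \in T by rewrite inE le ij0.
  by move: hi; rewrite mtJ ?eqxx // (subsetP TJ).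
have hjj0 := hmin j0 mtj0.
case: (eqVneq j j0) => [ejj0 | njj0].
  subst j; have := big k hk; rewrite eq_sym jk -ejk ltxx; by move/(_ isT).
by have := big j hj njj0; rewrite ltNge hjj0.
Qed.
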